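(* Let $G$ be a two-sided bipartite $\epsilon$-expander with bipartition $A,B$ and maximum degree $\Delta$, and let $n:=|A|=|B|$ with $n\geq 3$. Let $k\geq 2$ be an integer, and for each vertex $v$ of $G$ let $k_v$ be an integer with $k\leq k_v\leq(1+\frac{\epsilon}{4})k$. Let $G'$ be a bipartite graph with bipartition $X,Y$ such that: (i) $G'$ contains pairwise disjoint cycles $\{C_v: v\in V(G)\}$; (ii) $|C_v|=2k_v$ for each $v\in V(G)$; (iii) $V(G')=\bigcup_{v\in V(G)}V(C_v)$; (iv) for each edge $vw$ of $G$ there are edges $xy$ and $pq$ of $G'$ with $x\in V(C_v)\cap X$, $y\in V(C_w)\cap Y$, $p\in V(C_v)\cap Y$ and $q\in V(C_w)\cap X$. Then $G'$ is a two-sided bipartite $\epsilon'$-expander for some $\epsilon'>0$ depending only on $\epsilon$, $k$ and $\Delta$.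
   Context: For $\epsilon\in(0,1]$, a bipartite graph $G$ with bipartition $A,B$ is a two-sided bipartite $\epsilon$-expander if $|A|=|B|$, $|N(S)|\geq(1+\epsilon)|S|$ for every $S\subset A$ with $|S|\leq|A|/2$, and $|N(T)|\geq(1+\epsilon)|T|$ for every $T\subset B$ with $|T|\leq|B|/2$; here $N(S)$ is the set of vertices adjacent to some vertex of $S$. *)

(* Defs.v *)
From HB Require Import structures.
From mathcomp Require Import all_boot all_order all_algebra.
From mathcomp Require Import reals.
Set Implicit Arguments. Unset Strict Implicit. Unset Printing Implicit Defensive.
Import Order.TTheory GRing.Theory Num.Theory.
Local Open Scope ring_scope.

Definition simple_graph (T : finType) (e : rel T) : Prop :=
  symmetric e /\ irreflexive e.

Definition nbhd (T : finType) (e : rel T) (S : {set T}) : {set T} :=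
  [set y | [exists x in S, e x y]].

Definition deg (T : finType) (e : rel T) (v : T) : nat := #|[set w | e v w]|.

Definition max_deg (T : finType) (e : rel T) : nat := (\max_(v : T) deg e v)%N.

Definition bipartite_with (T : finType) (e : rel T) (A B : {set T}) : Prop :=
  [/\ simple_graph e, A :&: B = set0, A :|: B = setT &
      forall x y, e x y -> (x \in A /\ y \in B) \/ (x \in B /\ y \in A)].

(* Two-sided bipartite eps-expander (eps in (0,1] is a hypothesis of the
   definition in the paper; we include it). *)
Definition two_sided_expander (R : realType) (eps : R)
    (T : finType) (e : rel T) (A B : {set T}) : Prop :=
  [/\ 0 < eps <= 1, bipartite_with e A B, #|A| = #|B|,
      (forall S : {set T}, S \subset A -> (2 * #|S| <= #|A|)%N ->
          (1 + eps) * #|S|%:R <= #|nbhd e S|%:R) &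
      (forall S : {set T}, S \subset B -> (2 * #|S| <= #|B|)%N ->
          (1 + eps) * #|S|%:R <= #|nbhd e S|%:R)].

Definition is_cycle_in (T : finType) (e : rel T) (c : seq T) : Prop :=
  [/\ uniq c, (3 <= size c)%N & cycle e c].

(* Main.v *)
Require Import Defs.
From HB Require Import structures.
From mathcomp Require Import all_boot all_order all_algebra zify ring lra.
From mathcomp Require Import reals.
Import Order.TTheory GRing.Theory Num.Theory.
Set Implicit Arguments. Unset Strict Implicit.

Lemma modS_case (i N : nat) : 0 < N -> i.+1 %% N = if (i %% N).+1 < N then (i%%N).+1 else 0.
Proof. move=> H; case: ltnP => h.
- rewrite -addn1 -modnDml addn1 modn_small //.
- have e : (i %% N).+1 = N. have := ltn_pmod i H. lia.
  by rewrite -addn1 -modnDml addn1 e modnn.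
Qed.

Lemma cyc_adj (W : eqType) (e : rel W) (c : seq W) x0 : cycle e c -> 0 < size c ->
  forall i, e (nth x0 c (i %% size c)) (nth x0 c (i.+1 %% size c)).
Proof.
case: c => [|y s] //= Hc _ i.
move/pathP: Hc => /(_ x0 (i %% (size s).+1)).
rewrite size_rcons ltn_pmod // => /(_ isT).
rewrite -rcons_cons nth_rcons /= ltn_pmod // nth_rcons modS_case //.
have := ltn_pmod i (ltn0Sn (size s)).
case: (ltnP (i %% (size s).+1) (size s)) => h1 h2.
- by rewrite ltnS h1.
- have -> : i %% (size s).+1 = size s by lia.
  by rewrite ltnn eqxx.
Qed.

Lemma bip_flip (W : finType) (e : rel W) (X Y : {set W}) x y :
  bipartite_with e X Y -> e x y -> (y \in X) = ~~ (x \in X).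
Proof.
case=> _ HI HU Hb /Hb [[hx hy]|[hx hy]].
- rewrite hx /=; apply/negP => hyX.
  have : y \in X :&: Y by rewrite inE hyX hy.
  by rewrite HI inE.
- rewrite hy; apply/esym/negP => hxX.
  have : x \in X :&: Y by rewrite inE hxX hx.
  by rewrite HI inE.
Qed.

Lemma inY_notX (W : finType) (e : rel W) (X Y : {set W}) x :
  bipartite_with e X Y -> (x \in Y) = ~~ (x \in X).
Proof.
case=> _ HI HU _.
case hX: (x \in X) => /=.
- apply/negP => hY. have : x \in X :&: Y by rewrite inE hX hY.
  by rewrite HI inE.
- have : x \in X :|: Y by rewrite HU inE. by rewrite inE hX.
Qed.

Lemma cyc_param (W : finType) (e : rel W) (X Y : {set W}) (c : seq W) (m : nat) :
  bipartite_with e X Y -> uniq c -> cycle e c -> size c = (2 * m)%N -> 0 < m ->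
  exists q : nat -> W, [/\ (forall i, q i \in c /\ (q i \in X) = ~~ odd i),
     (forall i j, i < 2 * m -> j < 2 * m -> q i = q j -> i = j),
     (forall x, x \in c -> (exists2 i, i < 2 * m & q i = x)),
     (forall i, e (q i) (q i.+1)) &
     (forall i, q (i + 2 * m) = q i)].
Proof.
move=> Hb Hu Hc Hs Hm.
have HN : 0 < size c by rewrite Hs; lia.
have x0 : W by case: c {Hs Hu Hc} HN => [|y s].
pose p i := nth x0 c (i %% size c).
have pc i : p i \in c by rewrite /p mem_nth // ltn_pmod.
have padj i : e (p i) (p i.+1) by exact: cyc_adj.
have pX i : (p i \in X) = odd i (+) (p 0 \in X).
  elim: i => [|i IH]; first by rewrite addFb.
  by rewrite (bip_flip Hb (padj i)) IH /=; by case: (odd i); case: (p 0 \in X).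
pose r := nat_of_bool (p 0 \notin X).
exists (fun i => p (i + r)); split.
- move=> i; split => //; rewrite pX oddD /r.
  by case: (p 0 \in X) => /=; rewrite ?addbF ?addbT ?negbK.
- move=> i j hi hj /eqP.
  rewrite /p nth_uniq ?ltn_pmod // Hs => /eqP H.
  have : i == j %[mod 2 * m] by rewrite -(eqn_modDr r) H.
  by rewrite !modn_small // => /eqP.
- move=> x hx.
  have hi := index_mem x c; rewrite hx in hi.
  exists ((index x c + 2 * m - r) %% (2 * m)); first by rewrite ltn_pmod ?muln_gt0.
  rewrite /p Hs modnDml.
  have -> : index x c + 2 * m - r + r = index x c + 2 * m.
    rewrite /r; case: (p 0 \notin X) => /=; lia.
  by rewrite modnDr modn_small -?Hs // nth_index.
- by move=> i; rewrite addSn; exact: padj.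
- by move=> i; rewrite /p addnAC -Hs modnDr.
Qed.

Definition cycprops (W : finType) (e : rel W) (X : {set W}) (c : seq W) (m : nat)
  (q : nat -> W) :=
  [/\ (forall i, q i \in c /\ (q i \in X) = ~~ odd i),
     (forall i j, i < 2 * m -> j < 2 * m -> q i = q j -> i = j),
     (forall x, x \in c -> (exists2 i, i < 2 * m & q i = x)),
     (forall i, e (q i) (q i.+1)) &
     (forall i, q (i + 2 * m) = q i)].

Lemma cX_char W e X c m q : @cycprops W e X c m q ->
  forall x, x \in X -> x \in c -> exists2 j, j < m & x = q (2 * j).
Proof.
case=> H1 _ H3 _ _ x hX hc.
have [i hi hq] := H3 x hc.
have := (H1 i).2; rewrite hq hX => /esym ho.
exists i./2; first by lia.
by rewrite -hq; congr q; lia.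
Qed.

Lemma cY_char W e X c m q : @cycprops W e X c m q ->
  forall x, x \notin X -> x \in c -> exists2 j, j < m & x = q (2 * j).+1.
Proof.
case=> H1 _ H3 _ _ x hX hc.
have [i hi hq] := H3 x hc.
have := (H1 i).2; rewrite hq (negbTE hX) => /esym/negbFE ho.
exists i./2; first by lia.
by rewrite -hq; congr q; lia.
Qed.

Lemma card_cX W e X c m q : @cycprops W e X c m q ->
  #|[set x in X | x \in c]| = m.
Proof.
move=> Hp; have Hp' := Hp; case: Hp' => H1 H2 _ _ _.
have -> : [set x in X | x \in c] = [set q (2 * nat_of_ord j) | j : 'I_m].
  apply/setP => x; rewrite !inE; apply/andP/imsetP.
  - case=> hX hc; have [j hj ->] := cX_char Hp hX hc.
    by exists (Ordinal hj).
  - case=> j _ ->; have := H1 (2 * nat_of_ord j); rewrite oddM andFb.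
    by case=> -> ->.
rewrite card_imset ?card_ord //.
move=> i j hq; apply: ord_inj; have hi := ltn_ord i; have hj := ltn_ord j.
have : 2 * i = 2 * j by apply: (H2 _ _ _ _ hq); lia.
lia.
Qed.

Lemma card_cY W e X c m q : @cycprops W e X c m q ->
  #|[set x in c | x \notin X]| = m.
Proof.
move=> Hp; have Hp' := Hp; case: Hp' => H1 H2 _ _ _.
have -> : [set x in c | x \notin X] = [set q (2 * nat_of_ord j).+1 | j : 'I_m].
  apply/setP => x; rewrite !inE; apply/andP/imsetP.
  - case=> hc hX; have [j hj ->] := cY_char Hp hX hc.
    by exists (Ordinal hj).
  - case=> j _ ->; have := H1 (2 * nat_of_ord j).+1; rewrite /= oddM andFb.
    by case=> -> ->.
rewrite card_imset ?card_ord //.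
move=> i j hq; apply: ord_inj; have hi := ltn_ord i; have hj := ltn_ord j.
have : (2 * i).+1 = (2 * j).+1 by apply: (H2 _ _ _ _ hq); lia.
lia.
Qed.

Lemma nbhdP (W : finType) (e : rel W) (S : {set W}) y :
  reflect (exists2 x, x \in S & e x y) (y \in nbhd e S).
Proof.
rewrite /nbhd inE; apply: (iffP existsP).
- by case=> x /andP [h1 h2]; exists x.
- by case=> x h1 h2; exists x; rewrite h1.
Qed.

Lemma down_lemma (Q : pred nat) :
  (forall j, Q j -> 0 < j -> Q j.-1) -> forall t d, Q t -> d <= t -> Q (t - d).
Proof.
move=> H t; elim=> [|d IH] ht hd; first by rewrite subn0.
have := H (t - d) (IH ht (ltnW hd)); rewrite subnS; apply; lia.
Qed.

Lemma cyc_expand W e X Y c m q : bipartite_with e X Y -> @cycprops W e X c m q ->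
  forall S : {set W}, S \subset [set x in X | x \in c] ->
  #|S| <= #|[set y in nbhd e S | y \in c]| /\
  (0 < #|S| -> #|S| < m -> #|S|.+1 <= #|[set y in nbhd e S | y \in c]|).
Proof.
move=> Hb Hp S HS.
have Hsym : symmetric e by case: Hb => [[]].
have Hp' := Hp; case: Hp' => H1 H2 H3 H4 H5.
set T := [set y in nbhd e S | y \in c].
pose J := [set j : 'I_m | q (2 * j) \in S].
have SJ : S = [set q (2 * nat_of_ord j) | j in J].
  apply/setP => x; apply/idP/imsetP.
  - move=> hx; have := subsetP HS x hx; rewrite inE => /andP [hX hc].
    have [j hj ex] := cX_char Hp hX hc.
    by exists (Ordinal hj); rewrite // inE /= -ex.
  - by case=> j; rewrite inE => hj ->.
have injf : injective (fun j : 'I_m => q (2 * nat_of_ord j)).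
  move=> i j hq; apply: ord_inj; have hi := ltn_ord i; have hj := ltn_ord j.
  have : 2 * i = 2 * j by apply: (H2 _ _ _ _ hq); lia.
  lia.
have injg : injective (fun j : 'I_m => q (2 * nat_of_ord j).+1).
  move=> i j hq; apply: ord_inj; have hi := ltn_ord i; have hj := ltn_ord j.
  have : (2 * i).+1 = (2 * j).+1 by apply: (H2 _ _ _ _ hq); lia.
  lia.
have cSJ : #|S| = #|J| by rewrite SJ card_imset.
pose Rg := [set q (2 * nat_of_ord j).+1 | j in J].
have cR : #|Rg| = #|J| by rewrite card_imset.
have RT : Rg \subset T.
  apply/subsetP => y /imsetP [j hj ->]; rewrite inE (H1 _).1 andbT.
  apply/nbhdP; exists (q (2 * j)); last exact: H4.
  by move: hj; rewrite inE.
split; first by rewrite cSJ -cR subset_leq_card.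
move=> hS0 hSm.
pose Q := fun i => (i < m) && (q (2 * i) \in S).
have QJ : forall j : 'I_m, Q j = (j \in J) by move=> j; rewrite /Q inE ltn_ord.
pose pr := fun j => if j == 0 then m.-1 else j.-1.
have [j0 [hj0 Qj0 nQ]] : exists j0, [/\ j0 < m, Q j0 & ~~ Q (pr j0)].
  case: (boolP [exists j : 'I_m, Q j && ~~ Q (pr j)]).
    by case/existsP => j /andP [a b]; exists j.
  rewrite negb_exists => /forallP hn; exfalso.
  have cl : forall j, Q j -> Q (pr j).
    move=> j hj; have hjm : j < m by case/andP: hj.
    by have := hn (Ordinal hjm); rewrite /= hj /= negbK.
  have cl' : forall j, Q j -> 0 < j -> Q j.-1.
    move=> j hj hj0; have := cl j hj; rewrite /pr; case: eqP => //; lia.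
  have [x hx] : exists x, x \in S by apply/set0Pn; rewrite -card_gt0.
  move: hx; rewrite SJ => /imsetP [j1 hj1 _].
  have Q1 : Q j1 by rewrite QJ.
  have Q0 : Q 0 by have := down_lemma cl' Q1 (leqnn j1); rewrite subnn.
  have Qm : Q m.-1 by exact: (cl 0 Q0).
  have Qall : forall i, i < m -> Q i.
    move=> i hi; have := down_lemma cl' Qm (_ : m.-1 - i <= m.-1).
    by rewrite (_ : m.-1 - (m.-1 - i) = i); [apply; lia | lia].
  have : m <= #|S|.
    rewrite -(card_cX Hp); apply: subset_leq_card; apply/subsetP => z.
    rewrite inE => /andP [hX hc]; have [j hj ->] := cX_char Hp hX hc.
    by case/andP: (Qall j hj).
  lia.
have hpr : pr j0 < m by rewrite /pr; case: eqP => _; lia.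
set y0 := q (2 * pr j0).+1.
have y0T : y0 \in T.
  rewrite inE (H1 _).1 andbT; apply/nbhdP; exists (q (2 * j0)).
    by move/andP: Qj0 => [].
  rewrite Hsym.
  have -> : q (2 * j0) = q (2 * pr j0).+2.
    rewrite /pr; case: eqP => h.
    + rewrite h muln0 (_ : (2 * m.-1).+2 = 0 + 2 * m) ?H5 //; lia.
    + congr q; lia.
  exact: H4.
have y0R : y0 \notin Rg.
  apply/imsetP => [[j hj hy]].
  have : (2 * pr j0).+1 = (2 * j).+1 by apply: (H2 _ _ _ _ hy); have := ltn_ord j; lia.
  move=> h; move: nQ; rewrite (_ : pr j0 = j); last by lia.
  by rewrite QJ hj.
have cU : #|y0 |: Rg| = #|Rg|.+1 by rewrite cardsU1 y0R.
rewrite cSJ -cR -cU.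
apply: subset_leq_card; apply/subsetP => y; rewrite in_setU1 => /orP [/eqP -> //|].
exact: (subsetP RT).
Qed.

Lemma bip_swap (V : finType) (e : rel V) (A B : {set V}) :
  bipartite_with e A B -> bipartite_with e B A.
Proof.
case=> hs hI hU hb; split => //; first by rewrite setIC.
  by rewrite setUC.
by move=> x y /hb [[]|[]]; auto.
Qed.

Lemma tse_swap (R : realType) (eps : R) (V : finType) (e : rel V) (A B : {set V}) :
  two_sided_expander eps e A B -> two_sided_expander eps e B A.
Proof. by case=> h1 h2 h3 h4 h5; split => //; exact: bip_swap. Qed.

Lemma bip_BA (V : finType) (e : rel V) (A B : {set V}) x y :
  bipartite_with e A B -> e x y -> x \in B -> y \in A.
Proof.
case=> _ hI _ hb /hb [[hx hy]|[hx hy]] // hxB.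
have : x \in A :&: B by rewrite inE hx hxB.
by rewrite hI inE.
Qed.

Lemma nbhd_sub (V : finType) (e : rel V) (S1 S2 : {set V}) :
  S1 \subset S2 -> nbhd e S1 \subset nbhd e S2.
Proof.
move=> h; apply/subsetP => y /nbhdP [x hx hxy]; apply/nbhdP; exists x => //.
exact: (subsetP h).
Qed.

Local Open Scope ring_scope.

Lemma big_side (R : realType) (eps n a N : R) : 0 < eps -> eps <= 1 -> a <= n ->
  (1 + eps) * (n - N) <= n - a -> a + eps / 2 * (n - a) <= N.
Proof.
move=> he0 he1 han h.
have h1 : 0 <= (n - a) * (eps * (1 - eps)) by rewrite mulr_ge0 ?subr_ge0 // mulr_ge0 ?subr_ge0 // ltW.
rewrite leNgt; apply/negP => h2.
have h3 : (1 + eps) * (a + eps / 2 * (n - a) - N) > 0 by rewrite mulr_gt0 ?subr_gt0 // ltr_wpDr // ltW.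
nra.
Qed.

Lemma small_side (R : realType) (eps a N : R) : 0 < eps -> 0 <= a ->
  (1 + eps) * a <= N -> a + eps * a <= N.
Proof. move=> *; nra. Qed.

Lemma comb (R : realType) (eps a b n NA NB d1 d2 g : R) :
  0 < eps -> eps <= 1 -> 0 <= a -> 0 <= b -> a <= n -> b <= n -> 4 * (a + b) <= 5 * n ->
  0 <= d1 -> 0 <= d2 -> NA - b <= d1 -> NB - a <= d2 -> d1 + d2 <= g ->
  (2 * a <= n -> a + eps * a <= NA) -> (n < 2 * a -> a + eps / 2 * (n - a) <= NA) ->
  (2 * b <= n -> b + eps * b <= NB) -> (n < 2 * b -> b + eps / 2 * (n - b) <= NB) ->
  eps / 8 * (a + b) <= g.
Proof.
move=> he0 he1 ha hb han hbn hab hd1 hd2 h1 h2 hg hA1 hA2 hB1 hB2.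
case: (lerP (2 * a) n) => ca; case: (lerP (2 * b) n) => cb.
- have := hA1 ca; have := hB1 cb; nra.
- have := hA1 ca; have := hB2 cb => u v.
  case: (lerP a (7 * b)) => cc; nra.
- have := hA2 ca; have := hB1 cb => u v.
  case: (lerP b (7 * a)) => cc; nra.
- have := hA2 ca; have := hB2 cb; nra.
Qed.


Lemma Gexp_big (R : realType) (eps : R) (V : finType) (e : rel V) (A B : {set V}) :
  two_sided_expander eps e A B -> (2 <= #|A|)%N ->
  forall F : {set V}, F \subset A -> (#|A| < 2 * #|F|)%N ->
  (1 + eps) * (#|A|%:R - #|nbhd e F|%:R) <= #|A|%:R - #|F|%:R.
Proof.
move=> Ht hA F hFA hF.
have Ht' := Ht; case: Ht' => /andP [he0 he1] Hb hAB _ HexB.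
have Hsym : symmetric e by case: Hb => [[]].
set n := #|A|.
set U := B :\: nbhd e F.
have NU : nbhd e U \subset A :\: F.
  apply/subsetP => z /nbhdP [u]; rewrite inE => /andP [hu huB] huz.
  rewrite inE (bip_BA Hb huz huB) andbT; apply/negP => hzF.
  by move/negP: hu; apply; apply/nbhdP; exists z; rewrite // Hsym.
have cAF : #|A :\: F| = (n - #|F|)%N by rewrite cardsD (setIidPr hFA).
have hBU : (n <= #|U| + #|nbhd e F|)%N.
  rewrite /n hAB -cardsUI; apply: leq_trans (leq_addr _ _).
  apply: subset_leq_card; apply/subsetP => x hx; rewrite inE.
  by case: (boolP (x \in nbhd e F)) => h; rewrite ?orbT // inE h hx.
have hU2 : (2 * #|U| <= #|B|)%N.
  rewrite leqNgt; apply/negP => hlt.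
  have : (n./2 <= #|U|)%N by lia.
  case/card_geqP => s [us ss sU].
  pose U' := [set x in s].
  have cU' : #|U'| = n./2 by rewrite cardsE (card_uniqP us).
  have hU'B : U' \subset B.
    apply/subsetP => x; rewrite inE => /sU; rewrite inE; by case/andP.
  have := HexB U' hU'B; rewrite cU' -hAB => /(_ ltac:(lia)).
  have : (#|nbhd e U'| <= n - #|F|)%N.
    rewrite -cAF; apply: subset_leq_card; apply: subset_trans NU.
    apply: nbhd_sub; apply/subsetP => x; rewrite inE; exact: sU.
  move=> h1 h2.
  have h3 : (n - #|F| <= n./2)%N by lia.
  have h4 : (1 <= n./2)%N by lia.
  have : (1 + eps) * (n./2)%:R <= (n./2)%:R.
    apply: (le_trans h2); rewrite ler_nat; exact: leq_trans h1 h3.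
  rewrite mulrDl mul1r -lerBrDl subrr => h5.
  have : 0 < eps * (n./2)%:R by rewrite mulr_gt0 // ltr0n.
  by rewrite ltNge h5.
have := HexB U (subsetDl _ _) hU2.
have : (#|nbhd e U| <= n - #|F|)%N by rewrite -cAF; exact: subset_leq_card.
move=> h1 h2.
have h3 : (#|nbhd e U|%:R <= n%:R - #|F|%:R :> R).
  by rewrite -natrB ?ler_nat // subset_leq_card.
have h4 : (n%:R <= #|U|%:R + #|nbhd e F|%:R :> R) by rewrite -natrD ler_nat.
have h5 : n%:R - #|nbhd e F|%:R <= #|U|%:R :> R by rewrite lerBlDr.
apply: le_trans h3; apply: le_trans h2.
by apply: ler_wpM2l => //; rewrite addr_ge0 // ltW.
Qed.

Lemma Gexp_small (R : realType) (eps : R) (V : finType) (e : rel V) (A B : {set V}) :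
  two_sided_expander eps e A B ->
  forall F : {set V}, F \subset A -> (2 * #|F| <= #|A|)%N ->
  #|F|%:R + eps * #|F|%:R <= #|nbhd e F|%:R :> R.
Proof.
case=> _ _ _ h _ F hF h2; have := h F hF h2.
by rewrite mulrDl mul1r.
Qed.

Lemma Ggain (R : realType) (eps : R) (V : finType) (e : rel V) (A B : {set V}) :
  two_sided_expander eps e A B -> (2 <= #|A|)%N ->
  forall F : {set V}, (4 * #|F| <= 5 * #|A|)%N ->
  eps / 8 * #|F|%:R <= #|nbhd e F :\: F|%:R :> R.
Proof.
move=> Ht hA F hF.
have Ht' := Ht; case: Ht' => /andP [he0 he1] Hb hAB _ _.
have HtB := tse_swap Ht.
have HbB := bip_swap Hb.
have [_ hI hU _] := Hb.
set n := #|A|.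
set FA := F :&: A; set FB := F :&: B.
have cF : #|F| = (#|FA| + #|FB|)%N.
  rewrite -cardsUI.
  have -> : FA :|: FB = F by rewrite -setIUr hU setIT.
  have -> : FA :&: FB = set0.
    by rewrite setIACA setIid hI setI0.
  by rewrite cards0 addn0.
have NAB : nbhd e FA \subset B.
  apply/subsetP => y /nbhdP [x]; rewrite inE => /andP [_ hx] hxy.
  exact: (bip_BA HbB hxy hx).
have NBA : nbhd e FB \subset A.
  apply/subsetP => y /nbhdP [x]; rewrite inE => /andP [_ hx] hxy.
  exact: (bip_BA Hb hxy hx).
set D1 := nbhd e FA :\: FB; set D2 := nbhd e FB :\: FA.
have D12 : D1 :|: D2 \subset nbhd e F :\: F.
  apply/subsetP => y; rewrite in_setU => /orP [hy|hy]; rewrite inE.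
  - move: hy; rewrite inE => /andP [hy1 hy2].
    have hyB := subsetP NAB y hy2.
    rewrite (subsetP (nbhd_sub e (subsetIl F A)) y hy2) andbT.
    apply/negP => hyF; have : y \in FB by rewrite /FB inE hyF hyB.
    by rewrite (negbTE hy1).
  - move: hy; rewrite inE => /andP [hy1 hy2].
    have hyA := subsetP NBA y hy2.
    rewrite (subsetP (nbhd_sub e (subsetIl F B)) y hy2) andbT.
    apply/negP => hyF; have : y \in FA by rewrite /FA inE hyF hyA.
    by rewrite (negbTE hy1).
have D1D2 : D1 :&: D2 = set0.
  apply/setP => y; rewrite in_set0; apply/negP => /setIP [h1 h2].
  have a1 := subsetP NAB y (subsetP (subsetDl _ _) y h1).
  have a2 := subsetP NBA y (subsetP (subsetDl _ _) y h2).
  have : y \in A :&: B by rewrite inE a1 a2.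
  by rewrite hI inE.
have hg : (#|D1| + #|D2| <= #|nbhd e F :\: F|)%N.
  by rewrite -cardsUI D1D2 cards0 addn0 subset_leq_card.
have hd1 : (#|nbhd e FA| <= #|D1| + #|FB|)%N.
  rewrite /D1 cardsD; have := subset_leq_card (subsetIr (nbhd e FA) FB).
  have := subset_leq_card (subsetIl (nbhd e FA) FB); lia.
have hd2 : (#|nbhd e FB| <= #|D2| + #|FA|)%N.
  rewrite /D2 cardsD; have := subset_leq_card (subsetIr (nbhd e FB) FA).
  have := subset_leq_card (subsetIl (nbhd e FB) FA); lia.
have hAn : (#|FA| <= n)%N by apply: subset_leq_card; exact: subsetIr.
have hBn : (#|FB| <= n)%N by rewrite /n hAB; apply: subset_leq_card; exact: subsetIr.
rewrite cF natrD.
apply: (@comb R eps #|FA|%:R #|FB|%:R n%:R #|nbhd e FA|%:R #|nbhd e FB|%:R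
          #|D1|%:R #|D2|%:R) => //.
- by rewrite ler_nat.
- by rewrite ler_nat.
- by rewrite -natrD -!natrM ler_nat -cF.
- by rewrite lerBlDr -natrD ler_nat.
- by rewrite lerBlDr -natrD ler_nat.
- by rewrite -natrD ler_nat.
- rewrite -natrM ler_nat => h.
  exact: (Gexp_small Ht (subsetIr F A) h).
- rewrite -natrM ltr_nat => h; apply: big_side => //; first by rewrite ler_nat.
  exact: (Gexp_big Ht hA (subsetIr F A) h).
- rewrite -natrM ler_nat => h.
  move: h; rewrite /n hAB => h; exact: (Gexp_small HtB (subsetIr F B) h).
- rewrite -natrM ltr_nat => h; apply: big_side => //; first by rewrite ler_nat.
  move: h; rewrite /n hAB => h; rewrite hAB in hA.
  exact: (Gexp_big HtB hA (subsetIr F B) h).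
Qed.

Local Close Scope ring_scope.

Lemma cyc_facts (W : finType) (e : rel W) (X Y : {set W}) (c : seq W) (m : nat) :
  bipartite_with e X Y -> is_cycle_in e c -> size c = (2 * m)%N -> (0 < m)%N ->
  #|[set x in X | x \in c]| = m /\
  forall S : {set W}, S \subset [set x in X | x \in c] ->
  (#|S| <= #|[set y in nbhd e S | y \in c]|)%N /\
  ((0 < #|S|)%N -> (#|S| < m)%N -> (#|S|.+1 <= #|[set y in nbhd e S | y \in c]|)%N).
Proof.
move=> Hb [hu _ hc] hs hm.
have [q Hq] := cyc_param Hb hu hc hs hm.
split; first exact: card_cX Hq.
move=> S hS; exact: (cyc_expand Hb Hq hS).
Qed.

Lemma card_part (W V : finType) (C : V -> seq W) (f : W -> V) :
  (forall x v, (x \in C v) = (f x == v)) ->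
  forall Z : {set W}, #|Z| = (\sum_v #|[set x in Z | x \in C v]|)%N.
Proof.
move=> Hf Z.
rewrite -sum1_card (partition_big f predT) //=.
apply: eq_bigr => v _; rewrite -sum1_card; apply: eq_bigl => x.
by rewrite inE Hf.
Qed.

Local Open Scope ring_scope.

Lemma final_arith (R : realType) (eps K s f p g kk : R) :
  0 < eps -> eps <= 1 -> 0 < kk -> 0 <= f -> 0 <= p -> 0 <= s ->
  s <= K * (f + p) -> K <= 2 * kk -> eps / 8 * f <= g -> p <= g ->
  s + eps / (32 * kk) * s <= s + g.
Proof.
move=> he0 he1 hk hf hp hs h1 h2 h3 h4; rewrite lerD2l.
have h5 : s <= 2 * kk * (f + p).
  apply: (le_trans h1); apply: ler_wpM2r => //; exact: addr_ge0.
have h6 : eps / (32 * kk) * s <= eps / (32 * kk) * (2 * kk * (f + p)).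
  apply: ler_wpM2l => //; apply: divr_ge0; [exact: ltW | rewrite mulr_ge0 // ltW //].
have h7 : eps / (32 * kk) * (2 * kk * (f + p)) = eps / 16 * (f + p).
  by field; rewrite gt_eqF.
have h8 : eps / 16 * (f + p) = eps / 8 * f / 2 + eps * p / 16 by field.
have h9 : eps * p <= p by nra.
lra.
Qed.

Lemma card_sum_ind (V : finType) (Z : {set V}) : #|Z| = (\sum_v (v \in Z : nat))%N.
Proof.
rewrite -sum1_card big_mkcond /=; apply: eq_bigr => v _; by case: (v \in Z).
Qed.

Lemma one_side (R : realType) (eps : R) (k : nat) (V : finType) (e : rel V)
  (A B : {set V}) (kv : V -> nat) (W : finType) (e' : rel W) (X Y : {set W})
  (C : V -> seq W) :
  0 < eps -> eps <= 1 -> (2 <= k)%N ->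
  two_sided_expander eps e A B -> (3 <= #|A|)%N ->
  (forall v, (k <= kv v)%N /\ (kv v)%:R <= (1 + eps / 4) * k%:R) ->
  bipartite_with e' X Y ->
  (forall v, is_cycle_in e' (C v)) ->
  (forall v w, v != w -> [disjoint C v & C w]) ->
  (forall v, size (C v) = (2 * kv v)%N) ->
  (forall x : W, exists v, x \in C v) ->
  (forall v w, e v w -> exists x y,
      [/\ e' x y, x \in C v, x \in X, y \in C w & y \in Y]) ->
  #|X| = (\sum_v kv v)%N /\
  forall S : {set W}, S \subset X -> (2 * #|S| <= #|X|)%N ->
    (1 + eps / (32 * k%:R)) * #|S|%:R <= #|nbhd e' S|%:R.
Proof.
move=> he0 he1 hk Ht hA Hkv Hb Hcyc Hdisj Hsize Hcov Hiv.
pose cyc x := xchoose (Hcov x).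
have Hcyc1 x : x \in C (cyc x) := xchooseP (Hcov x).
have Hf : forall x v, (x \in C v) = (cyc x == v).
  move=> x v; apply/idP/eqP => [hx|<-//].
  case: (eqVneq (cyc x) v) => // hne.
  by have := disjointFr (Hdisj _ _ hne) (Hcyc1 x); rewrite hx.
have Hpart := card_part Hf.
have kvpos v : (0 < kv v)%N by have := (Hkv v).1; lia.
have Hfacts v := cyc_facts Hb (Hcyc v) (Hsize v) (kvpos v).
have cardX : #|X| = (\sum_v kv v)%N.
  by rewrite (Hpart X); apply: eq_bigr => v _; exact: (Hfacts v).1.
split => // S hSX hS2.
set T := nbhd e' S.
pose Sv v := [set x in S | x \in C v].
pose Tv v := [set y in T | y \in C v].
have SvS v : Sv v \subset S by apply/subsetP => x; rewrite inE => /andP [].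
have SvX v : Sv v \subset [set x in X | x \in C v].
  apply/subsetP => x; rewrite !inE => /andP [h1 h2]; by rewrite h2 (subsetP hSX x h1).
have Svk v : (#|Sv v| <= kv v)%N by rewrite -(Hfacts v).1; exact: subset_leq_card.
have SvT v : [set y in nbhd e' (Sv v) | y \in C v] \subset Tv v.
  apply/subsetP => y /setIdP [h1 h2]; apply/setIdP; split => //.
  exact: (subsetP (nbhd_sub e' (SvS v)) y h1).
have hTv1 v : (#|Sv v| <= #|Tv v|)%N.
  apply: leq_trans ((Hfacts v).2 _ (SvX v)).1 _; exact: subset_leq_card.
have hTv2 v : (0 < #|Sv v|)%N -> (#|Sv v| < kv v)%N -> (#|Sv v|.+1 <= #|Tv v|)%N.
  move=> a b; apply: leq_trans (((Hfacts v).2 _ (SvX v)).2 a b) _.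
  exact: subset_leq_card.
pose F := [set v | #|Sv v| == kv v].
pose P := [set v | (0 < #|Sv v|)%N && (#|Sv v| < kv v)%N].
have Ffull v : v \in F -> [set x in X | x \in C v] \subset S.
  rewrite inE => /eqP h.
  have : Sv v == [set x in X | x \in C v] by rewrite eqEcard SvX (Hfacts v).1 h /=.
  move/eqP => <-; exact: SvS.
pose Gs := P :|: (nbhd e F :\: F).
have hgain v : (#|Sv v| + (v \in Gs) <= #|Tv v|)%N.
  case: (boolP (v \in Gs)) => hv /=; last by rewrite addn0.
  rewrite addn1.
  case: (boolP (v \in P)) => hP.
    by move: hP; rewrite inE => /andP [a b]; exact: hTv2.
  move: hv; rewrite in_setU (negbTE hP) /= in_setD => /andP [hnF hN].
  have h0 : #|Sv v| = 0%N.
    move: hnF hP; rewrite !inE => a b; have := Svk v; lia.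
  rewrite h0; apply/card_gt0P.
  move/nbhdP: hN => [w hw hwv].
  have [x [y [h1 h2 h3 h4 h5]]] := Hiv w v hwv.
  exists y; rewrite inE h4 andbT; apply/nbhdP; exists x => //.
  by apply: (subsetP (Ffull w hw)); rewrite inE h2 h3.
have sumT : (#|S| + #|Gs| <= #|T|)%N.
  rewrite (Hpart S) (card_sum_ind Gs) (Hpart T) -big_split /=.
  by apply: leq_sum => v _; exact: hgain.
have hPG : (#|P| <= #|Gs|)%N by apply: subset_leq_card; exact: subsetUl.
have hNG : (#|nbhd e F :\: F| <= #|Gs|)%N by apply: subset_leq_card; exact: subsetUr.
have hSF : (k * #|F| <= #|S|)%N.
  rewrite (Hpart S) mulnC -sum_nat_const.
  apply: (@leq_trans (\sum_(v in F) #|Sv v|)%N).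
    apply: leq_sum => v; rewrite inE => /eqP ->; exact: (Hkv v).1.
  rewrite [X in (_ <= X)%N](bigID (fun v => v \in F)) /=; exact: leq_addr.
have hSFP : (#|S| <= \sum_v ((v \in F) + (v \in P)) * kv v)%N.
  rewrite (Hpart S); apply: leq_sum => v _.
  case: (boolP (v \in F)) => hF /=; first by apply: leq_trans (Svk v) _; lia.
  case: (boolP (v \in P)) => hP /=; first by rewrite add0n mul1n; exact: Svk v.
  change (#|Sv v| <= (0 + 0) * kv v)%N.
  move: hF hP; rewrite !inE => a b; have := Svk v; lia.
set K := (1 + eps / 4) * k%:R.
have hS_R : #|S|%:R <= K * (#|F|%:R + #|P|%:R).
  apply: (le_trans (_ : _ <= (\sum_v ((v \in F) + (v \in P)) * kv v)%N%:R)).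
    by rewrite ler_nat.
  rewrite natr_sum.
  apply: (le_trans (_ : _ <= \sum_v ((v \in F) + (v \in P))%N%:R * K)).
    apply: ler_sum => v _; rewrite natrM; apply: ler_wpM2l => //; exact: (Hkv v).2.
  rewrite -mulr_suml -natr_sum big_split /= -!card_sum_ind natrD mulrC //.
have hnV : #|V| = (2 * #|A|)%N.
  case: Hb => _ _ _ _; case: Ht => _ [_ hI hU _] hAB _ _.
  by rewrite -cardsT -hU cardsU hI cards0 subn0 -hAB; lia.
have hX_R : #|X|%:R <= #|V|%:R * K.
  rewrite cardX natr_sum.
  apply: (le_trans (_ : _ <= \sum_(v : V) K)); first by apply: ler_sum => v _; exact: (Hkv v).2.
  by rewrite sumr_const mulr_natl.
have hk0 : 0 < k%:R :> R by rewrite ltr0n; lia.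
have hF4 : (4 * #|F| <= 5 * #|A|)%N.
  rewrite -(ler_nat R) !natrM.
  have a1 : k%:R * #|F|%:R <= #|S|%:R :> R by rewrite -natrM ler_nat.
  have a2 : 2 * #|S|%:R <= #|X|%:R :> R by rewrite -natrM ler_nat.
  move: hX_R; rewrite hnV natrM /K => a3.
  have a4 : #|F|%:R <= #|A|%:R * (1 + eps / 4) :> R.
    rewrite leNgt; apply/negP => a5.
    have : k%:R * (#|A|%:R * (1 + eps / 4)) < k%:R * #|F|%:R :> R by rewrite ltr_pM2l.
    nra.
  have : 0 <= #|A|%:R :> R by [].
  nra.
have hG := Ggain Ht (ltnW hA) hF4.
have hK2 : K <= 2 * k%:R by rewrite /K; nra.
apply: (le_trans (_ : _ <= #|S|%:R + #|Gs|%:R)).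
  rewrite mulrDl mul1r.
  apply: (final_arith (K := K) (f := #|F|%:R) (p := #|P|%:R)) => //.
  - by apply: (le_trans hG); rewrite ler_nat.
  - by rewrite ler_nat.
by rewrite -natrD ler_nat.
Qed.

Unset Implicit Arguments.
Local Open Scope ring_scope.

Theorem lemma9 (R : realType) (eps : R) (k Delta : nat) :
  0 < eps -> eps <= 1 -> (2 <= k)%N ->
  exists eps' : R, 0 < eps' /\
  forall (V : finType) (e : rel V) (A B : {set V}),
    two_sided_expander eps e A B ->
    max_deg e = Delta ->
    (3 <= #|A|)%N ->
  forall (kv : V -> nat),
    (forall v, (k <= kv v)%N /\ (kv v)%:R <= (1 + eps / 4) * k%:R) ->
  forall (W : finType) (e' : rel W) (X Y : {set W}) (C : V -> seq W),
    bipartite_with e' X Y ->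
    (* (i) pairwise disjoint cycles C_v of G' *)
    (forall v, is_cycle_in e' (C v)) ->
    (forall v w, v != w -> [disjoint C v & C w]) ->
    (* (ii) |C_v| = 2 k_v *)
    (forall v, size (C v) = (2 * kv v)%N) ->
    (* (iii) V(G') is the union of the V(C_v) *)
    (forall x : W, exists v, x \in C v) ->
    (* (iv) *)
    (forall v w, e v w ->
       exists x y p q,
         [/\ e' x y, e' p q,
             [/\ x \in C v, x \in X, y \in C w & y \in Y] &
             [/\ p \in C v, p \in Y, q \in C w & q \in X]]) ->
    two_sided_expander eps' e' X Y.
Proof.
move=> he0 he1 hk.
have hk0 : 0 < k%:R :> R by rewrite ltr0n; case: (k) hk.
have hk1 : 1 <= k%:R :> R by rewrite ler1n; case: (k) hk.
exists (eps / (32 * k%:R)); split.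
  by rewrite divr_gt0 // mulr_gt0.
move=> V e A B Ht _ hA kv Hkv W e' X Y C Hb Hcyc Hdisj Hsize Hcov Hiv.
have Hiv1 : forall v w, e v w -> exists x y,
      [/\ e' x y, x \in C v, x \in X, y \in C w & y \in Y].
  move=> v w /Hiv [x [y [p [q [h1 _ [h3 h4 h5 h6] _]]]]].
  by exists x, y.
have Hiv2 : forall v w, e v w -> exists x y,
      [/\ e' x y, x \in C v, x \in Y, y \in C w & y \in X].
  move=> v w /Hiv [x [y [p [q [_ h2 _ [h3 h4 h5 h6]]]]]].
  by exists p, q.
have [cX HX] := one_side he0 he1 hk Ht hA Hkv Hb Hcyc Hdisj Hsize Hcov Hiv1.
have [cY HY] := one_side he0 he1 hk Ht hA Hkv (bip_swap Hb) Hcyc Hdisj Hsize Hcov Hiv2.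
split => //.
- apply/andP; split; first by rewrite divr_gt0 // mulr_gt0.
  rewrite ler_pdivrMr ?mulr_gt0 // mul1r.
  lra.
- by rewrite cX cY.
Qed.
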